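(* For every finite set of formulas $T$ and formula $\phi$ of $\mathsf{JRC}$: if $T\models_{\mathsf{JRC}}\phi$, then $T\vdash_{\mathsf{JRC}}\phi$.
   Context: Language of $\mathsf{JRC}$: countable sets $\mathsf{Var}$ (justification variables) and $\mathsf{Prop}$ (atoms). Terms $t ::= x \mid t+t$ ($x\in\mathsf{Var}$); formulas $\phi ::= p \mid {\sim}\phi \mid \phi\wedge\phi \mid \phi\to\phi \mid \phi\rightsquigarrow\phi \mid t{:}\phi$. A Routley relational model is $\mathcal M=(W,W_N,R,R_{Fm},R_{Tm},{*},\mathcal V)$ where $W$ is nonempty, $W_N\subseteq W$ nonempty (normal states); $R\subseteq W\times W\times W$ satisfies: for $w\in W_N$, $Rwvu$ iff $v=u$; $R_{Fm}$ assigns to each formula $\phi$ a relation $R_\phi\subseteq W\times W$; $R_{Tm}$ assigns to each term $t$ a relation $R_t\subseteq W\times W$; ${*}:W\to W$ with $w^{**}=w$; $\mathcal V:\mathsf{Prop}\to\mathcal P(W)$. Truth at every $w\in W$: $p$ iff $w\in\mathcal V(p)$; ${\sim}\phi$ iff $w^*\not\models\phi$; $\phi\wedge\psi$ iff both; $\phi\to\psi$ iff for all $v,u$ with $Rwvu$, $v\models\phi$ implies $u\models\psi$; $\phi\rightsquigarrow\psi$ iff $R_\phi(w)\subseteq[\psi]$; $t{:}\phi$ iff $R_t(w)\subseteq[\phi]$; $[\phi]=\{w\in W:w\models\phi\}$. A $\mathsf{JRC}$-model is a Routley relational model with: (1) $R_\phi(w)\subseteq[\phi]$ for all $w\in W_N$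 and all $\phi$; (2) for all $w\in W$, if $w\in[\phi]$ then $w\in R_\phi(w)$; (3) $R_{s+t}\subseteq R_s\cap R_t$. $T\models_{\mathsf{JRC}}\phi$ iff for every $\mathsf{JRC}$-model and every $w\in W_N$, if all members of $T$ are true at $w$ then $\phi$ is true at $w$. Tableaux: labels are elements of $\{0,1,2,\dots\}\cup\{0^\sharp,1^\sharp,2^\sharp,\dots\}$, with $\bar i=i^\sharp$ and $\overline{i^\sharp}=i$. Nodes have the forms $\phi,+x$; $\phi,-x$; $x\rhd_\phi y$; $x\rhd_t y$; $rxyz$. Rules (applied to a branch; $x,y,z$ arbitrary labels; $j,k$ natural numbers): (T$\sim$) from ${\sim}\phi,+x$ add $\phi,-\bar x$; (F$\sim$) from ${\sim}\phi,-x$ add $\phi,+\bar x$; (T$\wedge$) from $\phi\wedge\psi,+x$ add $\phi,+x$ and $\psi,+x$; (F$\wedge$) from $\phi\wedge\psi,-x$ split into $\phi,-x$ | $\psi,-x$; (T$\to$) from $\phi\to\psi,+x$ and $rxyz$ split into $\phi,-y$ | $\psi,+z$; (F$\to$) from $\phi\to\psi,-x$ add $rxjk$, $\phi,+j$, $\psi,-k$ with $j,k$ new, and $j=k$ if $x=0$; (T$\rightsquigarrow$) from $\phi\rightsquigarrow\psi,+x$ and $x\rhd_\phi y$ add $\psi,+y$; (F$\rightsquigarrow$) for $x\neq0$, from $\phi\rightsquigarrow\psi,-x$ add $x\rhd_\phi j$ and $\psi,-j$, $j$ new; (F$\rightsquigarrow_0$) from $\phi\rightsquigarrow\psi,-0$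 add $0\rhd_\phi j$, $\phi,+j$, $\psi,-j$, $j$ new; (Cut$_r$) if $\phi$ occurs on the branch as the antecedent of a $\rightsquigarrow$-formula and $x$ occurs on the branch, split into $\phi,-x$ | ($\phi,+x$ and $x\rhd_\phi x$); (T:) from $t{:}\phi,+x$ and $x\rhd_t y$ add $\phi,+y$; (F:) from $t{:}\phi,-x$ add $x\rhd_t j$ and $\phi,-j$, $j$ new; ($\rhd_+$) from $x\rhd_{s+t}y$ add $x\rhd_s y$ and $x\rhd_t y$; (Normality) for any $x$ occurring on the branch add $r0xx$. A branch is closed if it contains $\phi,+x$ and $\phi,-x$ for some $\phi,x$; a tableau is closed if all its branches are. $T\vdash_{\mathsf{JRC}}\phi$ iff there is a closed tableau whose initial single branch consists of $\psi,+0$ for each $\psi\in T$ and $\phi,-0$. *)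

(* Defs.v *)
From Stdlib Require Import List.
Import ListNotations.

Inductive tm : Type :=
| TVar : nat -> tm
| TPlus : tm -> tm -> tm.

Inductive fm : Type :=
| Atom : nat -> fm
| Neg : fm -> fm
| And : fm -> fm -> fm
| Imp : fm -> fm -> fm
| Cond : fm -> fm -> fm
| Just : tm -> fm -> fm.

Record rmodel : Type := {
  W : Type;
  WN : W -> Prop;
  WN_nonempty : exists w, WN w;
  R : W -> W -> W -> Prop;
  R_normal : forall w v u, WN w -> (R w v u <-> v = u);
  RFm : fm -> W -> W -> Prop;
  RTm : tm -> W -> W -> Prop;
  star : W -> W;
  star_invol : forall w, star (star w) = w;
  V : nat -> W -> Prop
}.

Fixpoint sat (M : rmodel) (w : W M) (f : fm) {struct f} : Prop :=
  match f with
  | Atom p => V M p w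
  | Neg a => ~ sat M (star M w) a
  | And a b => sat M w a /\ sat M w b
  | Imp a b => forall v u, R M w v u -> sat M v a -> sat M u b
  | Cond a b => forall v, RFm M a w v -> sat M v b
  | Just t a => forall v, RTm M t w v -> sat M v a
  end.

Definition JRC_model (M : rmodel) : Prop :=
  (forall w a v, WN M w -> RFm M a w v -> sat M v a) /\
  (forall w a, sat M w a -> RFm M a w w) /\
  (forall s t w v, RTm M (TPlus s t) w v -> RTm M s w v /\ RTm M t w v).

Definition entails (T : list fm) (phi : fm) : Prop :=
  forall M : rmodel, JRC_model M ->
  forall w : W M, WN M w ->
  (forall psi, In psi T -> sat M w psi) -> sat M w phi.

(* Labels: LN i is i, LS i is i^sharp. *)
Inductive label : Type :=
| LN : nat -> label
| LS : nat -> label.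

Definition bar (x : label) : label :=
  match x with LN i => LS i | LS i => LN i end.

Inductive node : Type :=
| NF : fm -> bool -> label -> node          (* phi,+x (true) / phi,-x (false) *)
| NRF : fm -> label -> label -> node
| NRT : tm -> label -> label -> node
| NR : label -> label -> label -> node.

Definition labels_of (n : node) : list label :=
  match n with
  | NF _ _ x => [x]
  | NRF _ x y => [x; y]
  | NRT _ x y => [x; y]
  | NR x y z => [x; y; z]
  end.

Definition occurs (x : label) (B : list node) : Prop :=
  exists n, In n B /\ In x (labels_of n).

Definition fresh (j : nat) (B : list node) : Prop := ~ occurs (LN j) B.

(* closes B : the branch B can be extended, by applying the rules, to a
   tableau all of whose branches are closed. *)
Inductive closes : list node -> Prop :=
| c_closed : forall B f x,
    In (NF f true x) B -> In (NF f false x) B -> closes B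
| c_Tneg : forall B a x,
    In (NF (Neg a) true x) B -> closes (NF a false (bar x) :: B) -> closes B
| c_Fneg : forall B a x,
    In (NF (Neg a) false x) B -> closes (NF a true (bar x) :: B) -> closes B
| c_Tand : forall B a b x,
    In (NF (And a b) true x) B ->
    closes (NF a true x :: NF b true x :: B) -> closes B
| c_Fand : forall B a b x,
    In (NF (And a b) false x) B ->
    closes (NF a false x :: B) -> closes (NF b false x :: B) -> closes B
| c_Timp : forall B a b x y z,
    In (NF (Imp a b) true x) B -> In (NR x y z) B ->
    closes (NF a false y :: B) -> closes (NF b true z :: B) -> closes B
| c_Fimp : forall B a b x j k,
    In (NF (Imp a b) false x) B -> fresh j B -> fresh k B ->
    (x = LN 0 -> j = k) -> (x <> LN 0 -> j <> k) ->
    closes (NR x (LN j) (LN k) :: NF a true (LN j) :: NF b false (LN k) :: B) ->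
    closes B
| c_Tcond : forall B a b x y,
    In (NF (Cond a b) true x) B -> In (NRF a x y) B ->
    closes (NF b true y :: B) -> closes B
| c_Fcond : forall B a b x j,
    x <> LN 0 -> In (NF (Cond a b) false x) B -> fresh j B ->
    closes (NRF a x (LN j) :: NF b false (LN j) :: B) -> closes B
| c_Fcond0 : forall B a b j,
    In (NF (Cond a b) false (LN 0)) B -> fresh j B ->
    closes (NRF a (LN 0) (LN j) :: NF a true (LN j) :: NF b false (LN j) :: B) ->
    closes B
| c_cut : forall B a x,
    (exists b s y, In (NF (Cond a b) s y) B) -> occurs x B ->
    closes (NF a false x :: B) ->
    closes (NF a true x :: NRF a x x :: B) -> closes B
| c_Tjust : forall B t a x y,
    In (NF (Just t a) true x) B -> In (NRT t x y) B ->
    closes (NF a true y :: B) -> closes B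
| c_Fjust : forall B t a x j,
    In (NF (Just t a) false x) B -> fresh j B ->
    closes (NRT t x (LN j) :: NF a false (LN j) :: B) -> closes B
| c_plus : forall B s t x y,
    In (NRT (TPlus s t) x y) B ->
    closes (NRT s x y :: NRT t x y :: B) -> closes B
| c_norm : forall B x,
    occurs x B -> closes (NR (LN 0) x x :: B) -> closes B.

Definition derivable (T : list fm) (phi : fm) : Prop :=
  closes (NF phi false (LN 0) :: map (fun psi => NF psi true (LN 0)) T).

(* Main.v *)
Require Import Defs.
From Stdlib Require Import List Arith Lia Cantor Classical ClassicalEpsilon.
Import ListNotations.

Definition label_eq (x y : label) : {x = y} + {x <> y}.
Proof. decide equality; apply Nat.eq_dec. Defined.
Definition tm_eq (x y : tm) : {x = y} + {x <> y}.
Proof. decide equality; apply Nat.eq_dec. Defined.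
Definition fm_eq (x y : fm) : {x = y} + {x <> y}.
Proof. decide equality; try apply Nat.eq_dec; apply tm_eq. Defined.

Definition lnum (x : label) : nat := match x with LN i => i | LS i => i end.
Definition fresh_nat (B : list node) : nat :=
  S (list_max (map lnum (flat_map labels_of B))).

Lemma fresh_ok : forall B j, fresh_nat B <= j -> fresh j B.
Proof.
  intros B j Hj [n [Hn Hx]].
  assert (In j (map lnum (flat_map labels_of B))).
  { change j with (lnum (LN j)). apply in_map. apply in_flat_map. eauto. }
  assert (j <= list_max (map lnum (flat_map labels_of B))).
  { pose proof (list_max_le (map lnum (flat_map labels_of B))
       (list_max (map lnum (flat_map labels_of B)))) as [L _].
    specialize (L (le_n _)). rewrite Forall_forall in L. auto. }
  unfold fresh_nat in Hj. lia.
Qed.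

Definition rule_core (B : list node) (k : nat) (n1 n2 : option node) (l : nat)
  : option (list node * list node) :=
  match k with
  | 0 => match n1 with Some (NF (Neg a) true x) =>
           Some ([NF a false (bar x)], [NF a false (bar x)]) | _ => None end
  | 1 => match n1 with Some (NF (Neg a) false x) =>
           Some ([NF a true (bar x)], [NF a true (bar x)]) | _ => None end
  | 2 => match n1 with Some (NF (And a b) true x) =>
           Some ([NF a true x; NF b true x], [NF a true x; NF b true x]) | _ => None end
  | 3 => match n1 with Some (NF (And a b) false x) =>
           Some ([NF a false x], [NF b false x]) | _ => None end
  | 4 => match n1, n2 with
         | Some (NF (Imp a b) true x), Some (NR x' y z) =>
           if label_eq x x' then Some ([NF a false y], [NF b true z]) else None
         | _, _ => None end
  | 5 => match n1 with Some (NF (Imp a b) false x) =>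
           let j := fresh_nat B in
           let k := if label_eq x (LN 0) then j else S j in
           Some ([NR x (LN j) (LN k); NF a true (LN j); NF b false (LN k)],
                 [NR x (LN j) (LN k); NF a true (LN j); NF b false (LN k)])
         | _ => None end
  | 6 => match n1, n2 with
         | Some (NF (Cond a b) true x), Some (NRF a' x' y) =>
           if fm_eq a a' then if label_eq x x' then Some ([NF b true y], [NF b true y])
           else None else None
         | _, _ => None end
  | 7 => match n1 with Some (NF (Cond a b) false x) =>
           let j := fresh_nat B in
           if label_eq x (LN 0) then
             Some ([NRF a (LN 0) (LN j); NF a true (LN j); NF b false (LN j)],
                   [NRF a (LN 0) (LN j); NF a true (LN j); NF b false (LN j)])
           else Some ([NRF a x (LN j); NF b false (LN j)], [NRF a x (LN j); NF b false (LN j)])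
         | _ => None end
  | 8 => match n1, n2 with
         | Some (NF (Cond a b) s y), Some nd =>
           match nth_error (labels_of nd) l with
           | Some x => Some ([NF a false x], [NF a true x; NRF a x x])
           | None => None end
         | _, _ => None end
  | 9 => match n1, n2 with
         | Some (NF (Just t a) true x), Some (NRT t' x' y) =>
           if tm_eq t t' then if label_eq x x' then Some ([NF a true y], [NF a true y])
           else None else None
         | _, _ => None end
  | 10 => match n1 with Some (NF (Just t a) false x) =>
           let j := fresh_nat B in
           Some ([NRT t x (LN j); NF a false (LN j)], [NRT t x (LN j); NF a false (LN j)])
         | _ => None end
  | 11 => match n1 with Some (NRT (TPlus s t) x y) =>
           Some ([NRT s x y; NRT t x y], [NRT s x y; NRT t x y]) | _ => None end
  | 12 => match n1 with Some nd =>
           match nth_error (labels_of nd) l with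
           | Some x => Some ([NR (LN 0) x x], [NR (LN 0) x x])
           | None => None end
         | None => None end
  | _ => None
  end.

Ltac dm H := repeat match type of H with
  | context [match ?x with _ => _ end] => destruct x eqn:?; try discriminate
  end.

Lemma rule_sound : forall B k n1 n2 l l1 l2,
  (forall nd, n1 = Some nd -> In nd B) -> (forall nd, n2 = Some nd -> In nd B) ->
  rule_core B k n1 n2 l = Some (l1, l2) ->
  closes (l1 ++ B) -> closes (l2 ++ B) -> closes B.
Proof.
  intros B k n1 n2 l l1 l2 H1 H2 E C1 C2.
  unfold rule_core in E.
  destruct k as [|[|[|[|[|[|[|[|[|[|[|[|[|k]]]]]]]]]]]]]; try discriminate;
  dm E; inversion E; subst; clear E; simpl in *;
  repeat match goal with
  | H : forall nd, Some ?n = Some nd -> In nd B |- _ => specialize (H n eq_refl)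
  end.
  all: try solve [eapply c_Tneg; eauto | eapply c_Fneg; eauto | eapply c_Tand; eauto
    | eapply c_Fand; eauto | eapply c_Timp; eauto | eapply c_Tcond; eauto | eapply c_Tjust; eauto
    | eapply c_plus; eauto | eapply c_Fjust; eauto using fresh_ok
    | eapply c_Fcond0; eauto using fresh_ok | eapply c_Fcond; eauto using fresh_ok].
  all: try solve [eapply c_Fimp with (j := fresh_nat B) (k := fresh_nat B); eauto using fresh_ok; congruence
    | eapply c_Fimp with (j := fresh_nat B) (k := S (fresh_nat B)); eauto using fresh_ok; congruence
    | eapply c_cut; eauto; eexists; split; [eassumption| eapply nth_error_In; eauto]
    | eapply c_norm; eauto; eexists; split; [eassumption| eapply nth_error_In; eauto] ].
Qed.


Definition exm (P : Prop) : {P} + {~P} := excluded_middle_informative P.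

Definition task := (nat * (nat * (nat * nat)))%type.

Definition rule_app (B : list node) (t : task) :=
  match t with (k, (i, (j, l))) =>
    rule_core B k (nth_error (rev B) i) (nth_error (rev B) j) l end.

Definition step (B : list node) (t : task) : list node :=
  match rule_app B t with
  | None => B
  | Some (l1, l2) => if exm (closes (l1 ++ B)) then l2 ++ B else l1 ++ B
  end.

Lemma nth_rev_In : forall (B : list node) i nd, nth_error (rev B) i = Some nd -> In nd B.
Proof. intros. apply in_rev. eapply nth_error_In; eauto. Qed.

Lemma step_open : forall B t, ~ closes B -> ~ closes (step B t).
Proof.
  intros B [k [i [j l]]] HB. unfold step.
  destruct (rule_app B (k,(i,(j,l)))) as [[l1 l2]|] eqn:E; auto.
  destruct (exm (closes (l1 ++ B))) as [C|C]; auto.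
  intro C2. apply HB. eapply rule_sound; eauto; intros; eapply nth_rev_In; eauto.
Qed.

Lemma step_ext : forall B t, exists e, step B t = e ++ B.
Proof.
  intros. unfold step. destruct (rule_app B t) as [[l1 l2]|].
  - destruct (exm _); eauto.
  - exists []. reflexivity.
Qed.

Lemma step_res : forall B t l1 l2, rule_app B t = Some (l1, l2) ->
  step B t = l1 ++ B \/ step B t = l2 ++ B.
Proof. intros. unfold step. rewrite H. destruct (exm _); auto. Qed.

Definition task_of (n : nat) : task :=
  let (a, _) := of_nat n in
  let (k, r1) := of_nat a in
  let (i, r2) := of_nat r1 in
  let (j, l) := of_nat r2 in (k, (i, (j, l))).

Lemma task_inf : forall t m, exists n, m <= n /\ task_of n = t.
Proof.
  intros [k [i [j l]]] m.
  exists (to_nat (to_nat (k, to_nat (i, to_nat (j, l))), m)). split.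
  - pose proof (to_nat_non_decreasing (to_nat (k, to_nat (i, to_nat (j, l)))) m). lia.
  - unfold task_of. rewrite !cancel_of_to. reflexivity.
Qed.

Fixpoint seqB (B0 : list node) (n : nat) : list node :=
  match n with 0 => B0 | S n => step (seqB B0 n) (task_of n) end.

Lemma seqB_mono : forall B0 m n, m <= n -> exists e, seqB B0 n = e ++ seqB B0 m.
Proof.
  intros B0 m n Hle. induction Hle.
  - exists []. reflexivity.
  - destruct IHHle as [e He]. simpl. destruct (step_ext (seqB B0 m0) (task_of m0)) as [e2 He2].
    rewrite He2, He. exists (e2 ++ e). apply app_assoc.
Qed.

Lemma seqB_incl : forall B0 m n nd, m <= n -> In nd (seqB B0 m) -> In nd (seqB B0 n).
Proof.
  intros. destruct (seqB_mono B0 m n H) as [e He]. rewrite He. apply in_or_app; auto.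
Qed.

Lemma seqB_open : forall B0, ~ closes B0 -> forall n, ~ closes (seqB B0 n).
Proof. intros B0 H n. induction n; simpl; auto. apply step_open; auto. Qed.

Lemma idx_stable : forall B0 m n i nd, m <= n ->
  nth_error (rev (seqB B0 m)) i = Some nd -> nth_error (rev (seqB B0 n)) i = Some nd.
Proof.
  intros. destruct (seqB_mono B0 m n H) as [e He]. rewrite He, rev_app_distr.
  rewrite nth_error_app1; auto. apply nth_error_Some. congruence.
Qed.

Definition HH (B0 : list node) (nd : node) : Prop := exists m, In nd (seqB B0 m).

Lemma HH_idx : forall B0 nd, HH B0 nd -> exists m i, nth_error (rev (seqB B0 m)) i = Some nd.
Proof.
  intros B0 nd [m Hm]. apply in_rev in Hm. apply In_nth_error in Hm. destruct Hm as [i Hi]. eauto.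
Qed.

Lemma apply_rule : forall B0 k nd1 nd2 l, HH B0 nd1 -> HH B0 nd2 ->
  exists B, (forall nd, In nd B -> HH B0 nd) /\
  match rule_core B k (Some nd1) (Some nd2) l with
  | None => True
  | Some (l1, l2) => (forall nd, In nd l1 -> HH B0 nd) \/ (forall nd, In nd l2 -> HH B0 nd)
  end.
Proof.
  intros B0 k nd1 nd2 l H1 H2.
  apply HH_idx in H1. apply HH_idx in H2.
  destruct H1 as [m1 [i H1]]. destruct H2 as [m2 [j H2]].
  destruct (task_inf (k, (i, (j, l))) (m1 + m2)) as [n [Hn Ht]].
  exists (seqB B0 n). split.
  - intros nd Hnd. exists n. auto.
  - assert (E1 : nth_error (rev (seqB B0 n)) i = Some nd1) by (eapply idx_stable; [|eassumption]; lia).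
    assert (E2 : nth_error (rev (seqB B0 n)) j = Some nd2) by (eapply idx_stable; [|eassumption]; lia).
    destruct (rule_core (seqB B0 n) k (Some nd1) (Some nd2) l) as [[l1 l2]|] eqn:E; auto.
    assert (RA : rule_app (seqB B0 n) (k, (i, (j, l))) = Some (l1, l2)).
    { simpl. rewrite E1, E2. exact E. }
    destruct (step_res _ _ _ _ RA) as [Sq|Sq]; [left|right]; intros nd Hnd; exists (S n);
      simpl; rewrite Ht, Sq; apply in_or_app; auto.
Qed.
Definition Inv (B : list node) := forall a y, In (NRF a (LN 0) y) B -> In (NF a true y) B.

Lemma rule_inv : forall B k n1 n2 l l1 l2, rule_core B k n1 n2 l = Some (l1, l2) ->
  Inv B -> Inv (l1 ++ B) /\ Inv (l2 ++ B).
Proof.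
  intros B k n1 n2 l l1 l2 E HI.
  unfold rule_core in E.
  destruct k as [|[|[|[|[|[|[|[|[|[|[|[|[|k]]]]]]]]]]]]]; try discriminate;
  dm E; inversion E; subst; clear E;
  split; intros a0 y0 Hin; simpl in *;
  repeat (destruct Hin as [Hin|Hin]; [try discriminate; try (inversion Hin; subst; clear Hin; simpl; tauto)|]);
  try (right; apply HI; auto; fail); try (right; right; apply HI; auto; fail);
  try (right; right; right; apply HI; auto; fail); try congruence.
Qed.

Lemma step_inv : forall B t, Inv B -> Inv (step B t).
Proof.
  intros B [k [i [j l]]] HI. unfold step.
  destruct (rule_app B (k, (i, (j, l)))) as [[l1 l2]|] eqn:E; auto.
  simpl in E. destruct (rule_inv _ _ _ _ _ _ _ E HI). destruct (exm _); auto.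
Qed.

Lemma seqB_inv : forall B0, Inv B0 -> forall n, Inv (seqB B0 n).
Proof. intros B0 H n. induction n; simpl; auto. apply step_inv; auto. Qed.
Definition occH (H : node -> Prop) (x : label) := exists nd, H nd /\ In x (labels_of nd).

Ltac fire B0 k nd1 nd2 l H1 H2 :=
  let B := fresh "B" in let HB := fresh "HB" in let R := fresh "R" in
  destruct (apply_rule B0 k nd1 nd2 l H1 H2) as [B [HB R]]; simpl in R;
  repeat match type of R with
  | context [label_eq ?a ?a] => destruct (label_eq a a); [|congruence]
  | context [fm_eq ?a ?a] => destruct (fm_eq a a); [|congruence]
  | context [tm_eq ?a ?a] => destruct (tm_eq a a); [|congruence]
  end.

Ltac inl := intros; simpl; auto.

Lemma HH_cons : forall B0, ~ closes B0 -> forall f x,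
  HH B0 (NF f true x) -> HH B0 (NF f false x) -> False.
Proof.
  intros B0 HB f x [m1 H1] [m2 H2].
  apply (seqB_open B0 HB (m1 + m2)). eapply c_closed.
  - eapply seqB_incl; [|exact H1]; lia.
  - eapply seqB_incl; [|exact H2]; lia.
Qed.

Lemma HH_inv : forall B0, Inv B0 -> forall a y, HH B0 (NRF a (LN 0) y) -> HH B0 (NF a true y).
Proof. intros B0 HI a y [m Hm]. exists m. apply (seqB_inv B0 HI m). auto. Qed.


Lemma S_Tneg : forall B0 a x, HH B0 (NF (Neg a) true x) -> HH B0 (NF a false (bar x)).
Proof. intros. fire B0 0 (NF (Neg a) true x) (NF (Neg a) true x) 0 H H. destruct R as [R|R]; apply R; simpl; auto. Qed.
Lemma S_Fneg : forall B0 a x, HH B0 (NF (Neg a) false x) -> HH B0 (NF a true (bar x)).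
Proof. intros. fire B0 1 (NF (Neg a) false x) (NF (Neg a) false x) 0 H H. destruct R as [R|R]; apply R; simpl; auto. Qed.
Lemma S_Tand : forall B0 a b x, HH B0 (NF (And a b) true x) -> HH B0 (NF a true x) /\ HH B0 (NF b true x).
Proof. intros. fire B0 2 (NF (And a b) true x) (NF (And a b) true x) 0 H H. destruct R as [R|R]; split; apply R; simpl; auto. Qed.
Lemma S_Fand : forall B0 a b x, HH B0 (NF (And a b) false x) -> HH B0 (NF a false x) \/ HH B0 (NF b false x).
Proof. intros. fire B0 3 (NF (And a b) false x) (NF (And a b) false x) 0 H H. destruct R as [R|R]; [left|right]; apply R; simpl; auto. Qed.
Lemma S_Timp : forall B0 a b x y z, HH B0 (NF (Imp a b) true x) -> HH B0 (NR x y z) ->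
  HH B0 (NF a false y) \/ HH B0 (NF b true z).
Proof. intros. fire B0 4 (NF (Imp a b) true x) (NR x y z) 0 H H0. destruct R as [R|R]; [left|right]; apply R; simpl; auto. Qed.
Lemma S_Fimp : forall B0 a b x, HH B0 (NF (Imp a b) false x) -> exists j k,
  HH B0 (NR x (LN j) (LN k)) /\ HH B0 (NF a true (LN j)) /\ HH B0 (NF b false (LN k)) /\ (x = LN 0 -> j = k).
Proof.
  intros. fire B0 5 (NF (Imp a b) false x) (NF (Imp a b) false x) 0 H H.
  destruct (label_eq x (LN 0)).
  - exists (fresh_nat B), (fresh_nat B). destruct R as [R|R]; repeat split; auto; apply R; simpl; auto.
  - exists (fresh_nat B), (S (fresh_nat B)). destruct R as [R|R]; repeat split; auto; try (apply R; simpl; auto); congruence.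
Qed.
Lemma S_Tcond : forall B0 a b x y, HH B0 (NF (Cond a b) true x) -> HH B0 (NRF a x y) -> HH B0 (NF b true y).
Proof. intros. fire B0 6 (NF (Cond a b) true x) (NRF a x y) 0 H H0. destruct R as [R|R]; apply R; simpl; auto. Qed.
Lemma S_Fcond : forall B0 a b x, x <> LN 0 -> HH B0 (NF (Cond a b) false x) -> exists j,
  HH B0 (NRF a x (LN j)) /\ HH B0 (NF b false (LN j)).
Proof.
  intros. fire B0 7 (NF (Cond a b) false x) (NF (Cond a b) false x) 0 H0 H0.
  destruct (label_eq x (LN 0)); [congruence|].
  exists (fresh_nat B). destruct R as [R|R]; split; apply R; simpl; auto.
Qed.
Lemma S_Fcond0 : forall B0 a b, HH B0 (NF (Cond a b) false (LN 0)) -> exists j,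
  HH B0 (NRF a (LN 0) (LN j)) /\ HH B0 (NF a true (LN j)) /\ HH B0 (NF b false (LN j)).
Proof.
  intros. fire B0 7 (NF (Cond a b) false (LN 0)) (NF (Cond a b) false (LN 0)) 0 H H.
  exists (fresh_nat B). destruct R as [R|R]; repeat split; apply R; simpl; auto.
Qed.
Lemma S_cut : forall B0 a b s y x, HH B0 (NF (Cond a b) s y) -> occH (HH B0) x ->
  HH B0 (NF a false x) \/ (HH B0 (NF a true x) /\ HH B0 (NRF a x x)).
Proof.
  intros B0 a b s y x H [nd [Hnd Hx]]. apply In_nth_error in Hx. destruct Hx as [l Hl].
  fire B0 8 (NF (Cond a b) s y) nd l H Hnd. rewrite Hl in R.
  destruct R as [R|R]; [left|right; split]; apply R; simpl; auto.
Qed.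
Lemma S_Tjust : forall B0 t a x y, HH B0 (NF (Just t a) true x) -> HH B0 (NRT t x y) -> HH B0 (NF a true y).
Proof. intros. fire B0 9 (NF (Just t a) true x) (NRT t x y) 0 H H0. destruct R as [R|R]; apply R; simpl; auto. Qed.
Lemma S_Fjust : forall B0 t a x, HH B0 (NF (Just t a) false x) -> exists j,
  HH B0 (NRT t x (LN j)) /\ HH B0 (NF a false (LN j)).
Proof.
  intros. fire B0 10 (NF (Just t a) false x) (NF (Just t a) false x) 0 H H.
  exists (fresh_nat B). destruct R as [R|R]; split; apply R; simpl; auto.
Qed.
Lemma S_plus : forall B0 s t x y, HH B0 (NRT (TPlus s t) x y) -> HH B0 (NRT s x y) /\ HH B0 (NRT t x y).
Proof. intros. fire B0 11 (NRT (TPlus s t) x y) (NRT (TPlus s t) x y) 0 H H. destruct R as [R|R]; split; apply R; simpl; auto. Qed.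
Lemma S_norm : forall B0 x, occH (HH B0) x -> HH B0 (NR (LN 0) x x).
Proof.
  intros B0 x [nd [Hnd Hx]]. apply In_nth_error in Hx. destruct Hx as [l Hl].
  fire B0 12 nd nd l Hnd Hnd. rewrite Hl in R.
  destruct R as [R|R]; apply R; simpl; auto.
Qed.
Definition rep0S (H : node -> Prop) := if exm (occH H (LS 0)) then LS 0 else LN 0.
Definition dflt H (x : label) := match x with LN _ => LN 0 | LS _ => rep0S H end.
Definition rep H (x : label) :=
  if exm (occH H x) then x else if exm (occH H (bar x)) then bar x else dflt H x.
Definition Rp (H : node -> Prop) y v u := if label_eq y (LN 0) then v = u else H (NR y v u).
Definition ante (H : node -> Prop) a := exists b s y, H (NF (Cond a b) s y).
Definition RFp (H : node -> Prop) (va : label -> Prop) a x y :=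
  H (NRF a x y) \/ (x = y /\ ~ ante H a /\ (x <> LN 0 \/ va (LN 0))).
Definition RFmd H va a x y :=
  RFp H va a (rep H x) y \/ (x = y /\ ~ occH H x /\ RFp H va a (rep H x) (rep H x)).

Fixpoint val (H : node -> Prop) (f : fm) (x : label) {struct f} : Prop :=
  match f with
  | Atom p => H (NF (Atom p) true (rep H x))
  | Neg a => ~ val H a (bar x)
  | And a b => val H a x /\ val H b x
  | Imp a b => forall v u, Rp H (rep H x) v u -> val H a v -> val H b u
  | Cond a b => forall v, RFmd H (val H a) a x v -> val H b v
  | Just t a => forall v, H (NRT t (rep H x) v) -> val H a v
  end.

Lemma bar_bar : forall x, bar (bar x) = x.
Proof. destruct x; reflexivity. Qed.

Lemma rep_id : forall H x, occH H x -> rep H x = x.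
Proof. intros. unfold rep. destruct (exm (occH H x)); tauto. Qed.

Lemma rep_occ : forall H x, occH H (LN 0) -> occH H (rep H x).
Proof.
  intros H x h0. unfold rep. destruct (exm (occH H x)); auto.
  destruct (exm (occH H (bar x))); auto.
  destruct x; simpl; auto. unfold rep0S. destruct (exm _); auto.
Qed.

Lemma rep_rep : forall H x, occH H (LN 0) -> rep H (rep H x) = rep H x.
Proof. intros. apply rep_id. apply rep_occ; auto. Qed.

Lemma rep_LS0 : forall H, occH H (LN 0) -> rep H (LS 0) = rep0S H.
Proof.
  intros H h0. unfold rep0S. destruct (exm (occH H (LS 0))) as [o|o].
  - apply rep_id; auto.
  - unfold rep. destruct (exm (occH H (LS 0))); [tauto|]. simpl.
    destruct (exm (occH H (LN 0))); tauto.
Qed.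

Lemma rep_bar : forall H x, occH H (LN 0) -> rep H (bar (rep H x)) = rep H (bar x).
Proof.
  intros H x h0.
  destruct (exm (occH H x)) as [o1|o1].
  - rewrite (rep_id H x o1). reflexivity.
  - destruct (exm (occH H (bar x))) as [o2|o2].
    + assert (E : rep H x = bar x).
      { unfold rep. destruct (exm (occH H x)); [tauto|]. destruct (exm (occH H (bar x))); tauto. }
      rewrite E, bar_bar, (rep_id H (bar x) o2). exact E.
    + assert (E1 : rep H x = dflt H x).
      { unfold rep. destruct (exm (occH H x)); [tauto|]. destruct (exm (occH H (bar x))); tauto. }
      assert (E2 : rep H (bar x) = dflt H (bar x)).
      { unfold rep. rewrite bar_bar. destruct (exm (occH H (bar x))); [tauto|].
        destruct (exm (occH H x)); tauto. }
      rewrite E1, E2. destruct x as [j|j]; simpl.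
      * apply rep_LS0; auto.
      * unfold rep0S. destruct (exm (occH H (LS 0))) as [o|o]; simpl.
        -- apply rep_id; auto.
        -- pose proof (rep_LS0 H h0) as E. unfold rep0S in E.
           destruct (exm (occH H (LS 0))); tauto.
Qed.

Lemma val_rep : forall H, occH H (LN 0) -> forall f x, val H f x <-> val H f (rep H x).
Proof.
  intros H h0 f. induction f; intros x; simpl.
  - rewrite rep_rep; tauto.
  - pose proof (IHf (bar x)) as A1. pose proof (IHf (bar (rep H x))) as A2.
    rewrite (rep_bar H x h0) in A2. tauto.
  - pose proof (IHf1 x). pose proof (IHf2 x). tauto.
  - rewrite rep_rep; tauto.
  - unfold RFmd. rewrite rep_rep; auto.
    assert (~ ~ occH H (rep H x)) by (intro C; apply C; apply rep_occ; auto).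
    split; intros Hv v Hr.
    + apply Hv. left. destruct Hr as [Hr|[e [n _]]]; auto. subst; tauto.
    + destruct Hr as [Hr|[e [n Hr]]]; [apply Hv; auto|]. subst v.
      apply IHf2. apply Hv. left; auto.
  - rewrite rep_rep; tauto.
Qed.
Lemma occ_NF : forall B0 f s x, HH B0 (NF f s x) -> occH (HH B0) x.
Proof. intros. exists (NF f s x). simpl; auto. Qed.

Lemma truth : forall B0, ~ closes B0 -> Inv B0 -> occH (HH B0) (LN 0) ->
  forall f x, (HH B0 (NF f true x) -> val (HH B0) f x) /\ (HH B0 (NF f false x) -> ~ val (HH B0) f x).
Proof.
  intros B0 hc HI h0 f. induction f; intros x; split; intros Hn; simpl.
  - rewrite rep_id; eauto using occ_NF.
  - rewrite rep_id; eauto using occ_NF. intro C. eapply HH_cons; eauto.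
  - apply (proj2 (IHf (bar x))). apply S_Tneg; auto.
  - intro C. apply C. apply (proj1 (IHf (bar x))). apply S_Fneg; auto.
  - destruct (S_Tand _ _ _ _ Hn). split; [apply IHf1|apply IHf2]; auto.
  - destruct (S_Fand _ _ _ _ Hn) as [A|A]; intros [C1 C2];
      [apply (proj2 (IHf1 x)) | apply (proj2 (IHf2 x))]; auto.
  -
    rewrite rep_id by eauto using occ_NF. intros v u Hr Hv. unfold Rp in Hr.
    destruct (label_eq x (LN 0)) as [e|e].
    + subst u x. apply (val_rep _ h0). apply (val_rep _ h0) in Hv.
      assert (HN : HH B0 (NR (LN 0) (rep (HH B0) v) (rep (HH B0) v))) by (apply S_norm, rep_occ; auto).
      destruct (S_Timp _ _ _ _ _ _ Hn HN) as [A|A].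
      * exfalso. exact (proj2 (IHf1 _) A Hv).
      * apply IHf2; auto.
    + destruct (S_Timp _ _ _ _ _ _ Hn Hr) as [A|A].
      * exfalso. exact (proj2 (IHf1 _) A Hv).
      * apply IHf2; auto.
  -
    rewrite rep_id by eauto using occ_NF.
    destruct (S_Fimp _ _ _ _ Hn) as [j [k [A1 [A2 [A3 A4]]]]].
    intro C. apply (proj2 (IHf2 _) A3). apply (C (LN j)).
    + unfold Rp. destruct (label_eq x (LN 0)); [rewrite A4; auto|auto].
    + apply IHf1; auto.
  -
    intros v Hr. unfold RFmd, RFp in Hr. rewrite rep_id in Hr by eauto using occ_NF.
    destruct Hr as [[Hr|[_ [Hna _]]]|[_ [Hno _]]].
    + apply IHf2. eapply S_Tcond; eauto.
    + exfalso. apply Hna. exists f2, true, x. auto.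
    + exfalso. apply Hno. eauto using occ_NF.
  -
    intro C. destruct (label_eq x (LN 0)) as [e|e].
    + subst x. destruct (S_Fcond0 _ _ _ Hn) as [j [A1 [A2 A3]]].
      apply (proj2 (IHf2 _) A3). apply C. left. unfold RFp.
      rewrite rep_id by auto. auto.
    + destruct (S_Fcond _ _ _ _ e Hn) as [j [A1 A2]].
      apply (proj2 (IHf2 _) A2). apply C. left. unfold RFp.
      rewrite rep_id by eauto using occ_NF. auto.
  - rewrite rep_id by eauto using occ_NF. intros v Hr. apply IHf. eapply S_Tjust; eauto.
  - rewrite rep_id by eauto using occ_NF. destruct (S_Fjust _ _ _ _ Hn) as [j [A1 A2]].
    intro C. apply (proj2 (IHf _) A2). apply C; auto.
Qed.
Lemma Rnorm_lemma : forall H, occH H (LN 0) -> forall w v u : label, w = LN 0 ->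
  (Rp H (rep H w) v u <-> v = u).
Proof.
  intros H h0 w v u e. subst w. rewrite rep_id by auto. unfold Rp.
  destruct (label_eq (LN 0) (LN 0)); tauto.
Qed.

Definition mkM (H : node -> Prop) (h0 : occH H (LN 0)) : rmodel :=
  {| W := label;
     WN := fun w => w = LN 0;
     WN_nonempty := ex_intro _ (LN 0) eq_refl;
     R := fun x v u => Rp H (rep H x) v u;
     R_normal := Rnorm_lemma H h0;
     RFm := fun a => RFmd H (val H a) a;
     RTm := fun t x y => H (NRT t (rep H x) y);
     star := bar;
     star_invol := bar_bar;
     V := fun p x => H (NF (Atom p) true (rep H x)) |}.

Lemma sat_val : forall H h0 f (x : label), sat (mkM H h0) x f <-> val H f x.
Proof.
  intros H h0 f. induction f; intros x; simpl.
  - tauto.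
  - rewrite IHf. tauto.
  - rewrite IHf1, IHf2. tauto.
  - split; intros A v u Hr Hv; apply IHf2; apply (A v u Hr); apply IHf1; auto.
  - split; intros A v Hr; apply IHf2; apply (A v Hr).
  - split; intros A v Hr; apply IHf; apply (A v Hr).
Qed.

Lemma RFp_refl : forall B0, ~ closes B0 -> Inv B0 -> forall h0 : occH (HH B0) (LN 0),
  forall a y, occH (HH B0) y -> val (HH B0) a y -> RFp (HH B0) (val (HH B0) a) a y y.
Proof.
  intros B0 hc HI h0 a y Hy Hv. unfold RFp.
  destruct (classic (ante (HH B0) a)) as [[b [s [z Ha]]]|Hna].
  - destruct (S_cut _ _ _ _ _ _ Ha Hy) as [A|[A1 A2]]; auto.
    exfalso. exact (proj2 (truth B0 hc HI h0 a y) A Hv).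
  - right. split; auto. split; auto.
    destruct (label_eq y (LN 0)); [subst; auto|auto].
Qed.

Lemma mkM_JRC : forall B0, ~ closes B0 -> Inv B0 -> forall h0 : occH (HH B0) (LN 0),
  JRC_model (mkM (HH B0) h0).
Proof.
  intros B0 hc HI h0. split; [|split].
  - intros w a v Hw Hr. simpl in *. subst w. apply sat_val.
    unfold RFmd, RFp in Hr. rewrite rep_id in Hr by auto.
    destruct Hr as [[Hr|[e [_ [C|C]]]]|[_ [C _]]].
    + apply (truth B0 hc HI h0). apply HH_inv; auto.
    + congruence.
    + subst; auto.
    + tauto.
  - intros w a Hs. simpl in *. apply sat_val in Hs. unfold RFmd.
    destruct (classic (occH (HH B0) w)) as [o|o].
    + left. rewrite rep_id by auto. apply RFp_refl; auto.
    + right. split; auto. split; auto. apply RFp_refl; auto.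
      * apply rep_occ; auto.
      * apply (proj1 (val_rep _ h0 a w)); auto.
  - intros s t w v Hr. simpl in *. apply S_plus; auto.
Qed.

Definition B0of (T : list fm) (phi : fm) :=
  NF phi false (LN 0) :: map (fun psi => NF psi true (LN 0)) T.

Theorem mainTheorem18 : forall (T : list fm) (phi : fm),
  entails T phi -> derivable T phi.
Proof.
  intros T phi HE. unfold derivable. fold (B0of T phi).
  apply NNPP. intro hc.
  assert (HI : Inv (B0of T phi)).
  { intros a y Hin. simpl in Hin. destruct Hin as [Hin|Hin]; [discriminate|].
    apply in_map_iff in Hin. destruct Hin as [? [? _]]; discriminate. }
  assert (Hphi : HH (B0of T phi) (NF phi false (LN 0))) by (exists 0; simpl; auto).
  assert (h0 : occH (HH (B0of T phi)) (LN 0)) by (eapply occ_NF; eauto).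
  pose proof (mkM_JRC _ hc HI h0) as J.
  specialize (HE (mkM (HH (B0of T phi)) h0) J (LN 0) eq_refl).
  assert (S : sat (mkM (HH (B0of T phi)) h0) (LN 0) phi).
  { apply HE. intros psi Hpsi. apply sat_val. apply (truth _ hc HI h0).
    exists 0. simpl. right. apply in_map_iff. eauto. }
  apply sat_val in S. exact (proj2 (truth _ hc HI h0 phi (LN 0)) Hphi S).
Qed.
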